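(* Fix $\vartheta_1\in(0,\pi/2)$ and $\varphi_1\in[0,\pi]$. If $\eta<\eta'$ are two points of $I=\bigcup_{k\ge0}I_k$ with $\Phi(\eta)=\Phi(\eta')=\varphi_1$, then $S(\eta)<S(\eta')$, where $S(\eta)=\sin\vartheta_1\,\eta/|\sin\eta|$.
   Context: For integers $k\ge0$ let $I_k=[\vartheta_1+k\pi,(k+1)\pi-\vartheta_1]$. For $\eta\in I_k$ set $\gamma(\eta)=\sqrt{1-\sin^2\vartheta_1/\sin^2\eta}$ and $$\Phi(\eta)=-\eta\,\gamma(\eta)+k\pi+\arccos\Big(\frac{\cos(\eta-k\pi)}{\cos\vartheta_1}\Big),\qquad\arccos\in[0,\pi].$$ (In the paper the solutions of $\Phi(\eta)=\varphi_1$ parametrize CR-geodesics from $(1,0,\dots,0)$ to points with $z_1=\cos\vartheta_1e^{i\varphi_1}$, and $S(\eta)$ is the corresponding geodesic length.) *)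

(* Defs.v *)
From Stdlib Require Import Reals Lra.
Open Scope R_scope.

Definition in_Ik (th1 : R) (k : nat) (eta : R) : Prop :=
  th1 + INR k * PI <= eta <= INR (S k) * PI - th1.

Definition gamma (th1 eta : R) : R :=
  sqrt (1 - (sin th1)^2 / (sin eta)^2).

Definition Phi (th1 : R) (k : nat) (eta : R) : R :=
  - eta * gamma th1 eta + INR k * PI + acos (cos (eta - INR k * PI) / cos th1).

Definition Sl (th1 eta : R) : R := sin th1 * eta / Rabs (sin eta).

(* Main.v *)
Require Import Defs.
From Stdlib Require Import Reals Lra Psatz Arith Lia.
From Coquelicot Require Import Coquelicot.
Open Scope R_scope.

Definition tt (th p : R) := acos (cos th * cos p).
Definition ss (th p : R) := sin (tt th p).
Definition ee (th : R) (k : nat) (p : R) := INR k * PI + tt th p.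
Definition gg (th p : R) := cos th * sin p / ss th p.
Definition PP (th : R) (k : nat) (p : R) := INR k * PI + p - ee th k p * gg th p.
Definition SS (th : R) (k : nat) (p : R) := sin th * ee th k p / ss th p.
Definition HH (th : R) (k : nat) (p : R) := ss th p - ee th k p * (cos th * cos p).
Definition FF (th : R) (k : nat) (f p : R) := ee th k p ^ 2 - (INR k * PI + p - f) ^ 2.
Definition dd (th p : R) := p - tt th p.

Lemma sc_facts th : 0 < th < PI/2 ->
  0 < sin th < 1 /\ 0 < cos th < 1 /\ sin th ^ 2 + cos th ^ 2 = 1.
Proof.
  intros H. pose proof PI_RGT_0.
  assert (0 < sin th) by (apply sin_gt_0; lra).
  assert (0 < cos th) by (apply cos_gt_0; lra).
  pose proof (sin2_cos2 th). unfold Rsqr in *.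
  repeat split; try nra.
Qed.

Lemma u_range th p : 0 < th < PI/2 -> -1 < cos th * cos p < 1.
Proof.
  intros H. destruct (sc_facts th H) as [[? ?] [[? ?] ?]].
  pose proof (COS_bound p). split; nra.
Qed.

Lemma cos_tt th p : 0 < th < PI/2 -> cos (tt th p) = cos th * cos p.
Proof. intros H. unfold tt. apply cos_acos. pose proof (u_range th p H). lra. Qed.

Lemma ss_sq th p : 0 < th < PI/2 -> ss th p ^ 2 = 1 - (cos th * cos p) ^ 2.
Proof.
  intros H. unfold ss. pose proof (sin2_cos2 (tt th p)). rewrite cos_tt in H0 by auto.
  unfold Rsqr in H0. nra.
Qed.

Lemma ss_pos th p : 0 < th < PI/2 -> sin th <= ss th p.
Proof.
  intros H. destruct (sc_facts th H) as [[? ?] [[? ?] ?]].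
  assert (0 <= ss th p).
  { unfold ss, tt. apply sin_ge_0; apply acos_bound. }
  pose proof (ss_sq th p H). pose proof (COS_bound p).
  assert (cos p ^2 <= 1) by nra.
  nra.
Qed.

Lemma acos_cos_th th : 0 < th < PI/2 -> acos (cos th) = th.
Proof. intros H. apply acos_cos. lra. Qed.

Lemma tt_range th p : 0 < th < PI/2 -> th <= tt th p <= PI - th.
Proof.
  intros H. destruct (sc_facts th H) as [[? ?] [[? ?] ?]].
  pose proof (acos_bound (cos th * cos p)) as Hb. fold (tt th p) in Hb.
  pose proof (cos_tt th p H) as Hc. pose proof (COS_bound p).
  split.
  - destruct (Rle_lt_dec th (tt th p)) as [|Hl]; auto.
    exfalso. pose proof (cos_decreasing_1 (tt th p) th ltac:(lra) ltac:(lra) ltac:(lra) ltac:(lra) Hl).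
    nra.
  - destruct (Rle_lt_dec (tt th p) (PI - th)) as [|Hl]; auto.
    exfalso. pose proof (cos_decreasing_1 (PI - th) (tt th p) ltac:(lra) ltac:(lra) ltac:(lra) ltac:(lra) Hl) as Hq.
    rewrite Rtrigo_facts.cos_pi_minus in Hq. nra.
Qed.

Lemma D_acos u : -1 < u < 1 -> derivable_pt_lim acos u (-1 / sqrt (1 - u²)).
Proof.
  intros H. apply (derive_pt_eq_1 _ _ _ (derivable_pt_acos u H)).
  apply derive_pt_acos.
Qed.

Lemma D_tt th p : 0 < th < PI/2 -> is_derive (tt th) p (cos th * sin p / ss th p).
Proof.
  intros H. apply is_derive_Reals.
  pose proof (u_range th p H) as Hu.
  assert (Hs: ss th p = sqrt (1 - (cos th * cos p)²)).
  { unfold ss, tt. apply sin_acos. lra. }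
  assert (Hsp: 0 < ss th p) by (pose proof (ss_pos th p H); destruct (sc_facts th H) as [[? ?] _]; lra).
  assert (E: tt th = comp acos (fun q => cos th * cos q)) by reflexivity.
  rewrite E.
  replace (cos th * sin p / ss th p) with ((-1 / sqrt (1 - (cos th * cos p)²)) * (cos th * - sin p)).
  2:{ rewrite <- Hs. field. lra. }
  apply derivable_pt_lim_comp.
  - apply derivable_pt_lim_scal. apply derivable_pt_lim_cos.
  - apply D_acos; auto.
Qed.

Ltac fix_tt th p Htt :=
  first [ split; [exact (ex_intro _ _ Htt)|] | exact (ex_intro _ _ Htt) | idtac ];
  try replace (Derive (fun x0 : R => tt th x0) p) with (cos th * sin p / ss th p)
    by (symmetry; apply is_derive_unique; exact Htt).

Lemma D_HH th k p : 0 < th < PI/2 ->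
  is_derive (HH th k) p (ee th k p * cos th * sin p).
Proof.
  intros H. pose proof (D_tt th p H) as Htt.
  pose proof (ss_pos th p H). destruct (sc_facts th H) as [[? ?] [[? ?] ?]].
  unfold HH, ss, ee. auto_derive.
  - repeat split; exact (ex_intro _ _ Htt).
  - replace (Derive (fun x0 : R => tt th x0) p) with (cos th * sin p / ss th p)
      by (symmetry; apply is_derive_unique; exact Htt).
    rewrite cos_tt by auto. unfold ss. field. unfold ss in H0. lra.
Qed.

Lemma D_SS th k p : 0 < th < PI/2 ->
  is_derive (SS th k) p (sin th * cos th * sin p / ss th p ^ 3 * HH th k p).
Proof.
  intros H. pose proof (D_tt th p H) as Htt.
  pose proof (ss_pos th p H). destruct (sc_facts th H) as [[? ?] [[? ?] ?]].
  unfold SS, HH, ss, ee. auto_derive.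
  - repeat split; try exact (ex_intro _ _ Htt). unfold ss in H0; lra.
  - replace (Derive (fun x0 : R => tt th x0) p) with (cos th * sin p / ss th p)
      by (symmetry; apply is_derive_unique; exact Htt).
    rewrite cos_tt by auto. unfold ss. field. unfold ss in H0. lra.
Qed.

Lemma D_PP th k p : 0 < th < PI/2 ->
  is_derive (PP th k) p (sin th ^ 2 / ss th p ^ 3 * HH th k p).
Proof.
  intros H. pose proof (D_tt th p H) as Htt.
  pose proof (ss_pos th p H). destruct (sc_facts th H) as [[? ?] [[? ?] ?]].
  pose proof (ss_sq th p H) as Hsq.
  unfold PP, HH, gg, ss, ee. auto_derive.
  - repeat split; try exact (ex_intro _ _ Htt). unfold ss in H0; lra.
  - replace (Derive (fun x0 : R => tt th x0) p) with (cos th * sin p / ss th p)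
      by (symmetry; apply is_derive_unique; exact Htt).
    rewrite cos_tt by auto. unfold ss in *. field_simplify. 2: lra.
    pose proof (sin2_cos2 p). unfold Rsqr in *.
    replace (sin th ^2) with (1 - cos th ^2) by lra.
    replace (sin p ^2) with (1 - cos p ^2) by nra.
    set (s := sin (tt th p)) in *.
    unfold Rdiv; f_equal. replace (s ^ 3) with (s * s ^ 2) by ring. rewrite Hsq. ring.
  - unfold ss in H0; lra.
Qed.

Lemma D_FF th k f p : 0 < th < PI/2 ->
  is_derive (FF th k f) p (2 * (f - PP th k p)).
Proof.
  intros H. pose proof (D_tt th p H) as Htt.
  pose proof (ss_pos th p H). destruct (sc_facts th H) as [[? ?] [[? ?] ?]].
  unfold FF, PP, gg, ee. auto_derive.
  - repeat split; try exact (ex_intro _ _ Htt).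
  - replace (Derive (fun x0 : R => tt th x0) p) with (cos th * sin p / ss th p)
      by (symmetry; apply is_derive_unique; exact Htt).
    field. lra.
Qed.

Lemma D_dd th p : 0 < th < PI/2 ->
  is_derive (dd th) p (1 - gg th p).
Proof.
  intros H. pose proof (D_tt th p H) as Htt.
  unfold dd, gg. auto_derive.
  - repeat split; try exact (ex_intro _ _ Htt).
  - replace (Derive (fun x0 : R => tt th x0) p) with (cos th * sin p / ss th p)
      by (symmetry; apply is_derive_unique; exact Htt).
    ring.
Qed.

Lemma mvt (f f' : R -> R) a b : a < b -> (forall x, is_derive f x (f' x)) ->
  exists c, f b - f a = f' c * (b - a) /\ a < c < b.
Proof.
  intros Hab Hd. apply MVT_cor2; auto. intros c _. apply is_derive_Reals. auto.
Qed.

Lemma cont_of (f f' : R -> R) : (forall x, is_derive f x (f' x)) -> continuity f.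
Proof.
  intros Hd x. apply derivable_continuous_pt. exists (f' x).
  apply is_derive_Reals. auto.
Qed.

Section Mono.
Variable th : R.
Hypothesis Hth : 0 < th < PI/2.

Lemma ee_pos k p : th <= ee th k p.
Proof.
  unfold ee. pose proof (tt_range th p Hth). pose proof (pos_INR k). pose proof PI_RGT_0. nra.
Qed.

Lemma ss_gt0 p : 0 < ss th p.
Proof. pose proof (ss_pos th p Hth). destruct (sc_facts th Hth) as [[? ?] _]. lra. Qed.

Lemma gg_le1 p : gg th p < 1.
Proof.
  pose proof (ss_gt0 p). pose proof (ss_sq th p Hth).
  destruct (sc_facts th Hth) as [[? ?] [[? ?] ?]].
  pose proof (sin2_cos2 p). unfold Rsqr in *.
  unfold gg. apply (Rmult_lt_reg_r (ss th p)); auto. unfold Rdiv. rewrite Rmult_assoc, Rinv_l by lra.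
  rewrite Rmult_1_r, Rmult_1_l.
  destruct (Rle_lt_dec (cos th * sin p) 0). lra.
  apply Rsqr_incrst_0; unfold Rsqr; try lra. nra.
Qed.

Lemma gg_ge0 p : 0 <= p <= PI -> 0 <= gg th p.
Proof.
  intros Hp. pose proof (ss_gt0 p). destruct (sc_facts th Hth) as [_ [[? ?] _]].
  pose proof (sin_ge_0 p ltac:(lra) ltac:(lra)). unfold gg.
  apply Rmult_le_pos. nra. left; apply Rinv_0_lt_compat; auto.
Qed.

Lemma M_H k p1 p2 : 0 <= p1 -> p1 < p2 -> p2 <= PI -> HH th k p1 < HH th k p2.
Proof.
  intros H1 H2 H3.
  destruct (mvt (HH th k) (fun p => ee th k p * cos th * sin p) p1 p2 H2 (fun x => D_HH th k x Hth))
    as [c [Hc Hc2]].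
  pose proof (ee_pos k c). destruct (sc_facts th Hth) as [[? ?] [[? ?] _]].
  assert (0 < sin c) by (apply sin_gt_0; lra).
  assert (0 < ee th k c * cos th * sin c).
  { apply Rmult_lt_0_compat; auto. apply Rmult_lt_0_compat; lra. }
  nra.
Qed.

Lemma M_H_le k p1 p2 : 0 <= p1 -> p1 <= p2 -> p2 <= PI -> HH th k p1 <= HH th k p2.
Proof.
  intros H1 H2 H3. destruct (Req_dec p1 p2). subst; lra. left; apply M_H; lra.
Qed.

Lemma M_S k p1 p2 : 0 <= p1 -> p1 < p2 -> p2 <= PI -> 0 <= HH th k p1 ->
  SS th k p1 < SS th k p2.
Proof.
  intros H1 H2 H3 H4.
  destruct (mvt (SS th k) _ p1 p2 H2 (fun x => D_SS th k x Hth)) as [c [Hc Hc2]].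
  pose proof (M_H k p1 c H1 ltac:(lra) ltac:(lra)).
  destruct (sc_facts th Hth) as [[? ?] [[? ?] _]].
  assert (0 < sin c) by (apply sin_gt_0; lra).
  pose proof (ss_gt0 c).
  assert (0 < sin th * cos th * sin c / ss th c ^ 3 * HH th k c).
  { apply Rmult_lt_0_compat; [|lra]. unfold Rdiv. apply Rmult_lt_0_compat.
    apply Rmult_lt_0_compat; [apply Rmult_lt_0_compat|]; lra.
    apply Rinv_0_lt_compat. apply pow_lt; lra. }
  nra.
Qed.

Lemma M_S_le k p1 p2 : 0 <= p1 -> p1 <= p2 -> p2 <= PI -> 0 <= HH th k p1 ->
  SS th k p1 <= SS th k p2.
Proof.
  intros H1 H2 H3 H4. destruct (Req_dec p1 p2). subst; lra. left; apply M_S; lra.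
Qed.

Lemma M_Pdec k p1 p2 : 0 <= p1 -> p1 < p2 -> p2 <= PI -> HH th k p2 <= 0 ->
  PP th k p2 < PP th k p1.
Proof.
  intros H1 H2 H3 H4.
  destruct (mvt (PP th k) _ p1 p2 H2 (fun x => D_PP th k x Hth)) as [c [Hc Hc2]].
  pose proof (M_H k c p2 ltac:(lra) ltac:(lra) ltac:(lra)).
  destruct (sc_facts th Hth) as [[? ?] [[? ?] _]].
  pose proof (ss_gt0 c).
  assert (0 < sin th ^ 2 / ss th c ^ 3).
  { unfold Rdiv. apply Rmult_lt_0_compat. apply pow_lt; lra.
    apply Rinv_0_lt_compat. apply pow_lt; lra. }
  assert (sin th ^ 2 / ss th c ^ 3 * HH th k c < 0) by nra.
  assert (sin th ^ 2 / ss th c ^ 3 * HH th k c * (p2 - p1) < 0) by nra.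
  lra.
Qed.

Lemma M_Pinc k p1 p2 : 0 <= p1 -> p1 < p2 -> p2 <= PI -> 0 <= HH th k p1 ->
  PP th k p1 < PP th k p2.
Proof.
  intros H1 H2 H3 H4.
  destruct (mvt (PP th k) _ p1 p2 H2 (fun x => D_PP th k x Hth)) as [c [Hc Hc2]].
  pose proof (M_H k p1 c ltac:(lra) ltac:(lra) ltac:(lra)).
  destruct (sc_facts th Hth) as [[? ?] [[? ?] _]].
  pose proof (ss_gt0 c).
  assert (0 < sin th ^ 2 / ss th c ^ 3).
  { unfold Rdiv. apply Rmult_lt_0_compat. apply pow_lt; lra.
    apply Rinv_0_lt_compat. apply pow_lt; lra. }
  assert (0 < sin th ^ 2 / ss th c ^ 3 * HH th k c) by nra.
  assert (0 < sin th ^ 2 / ss th c ^ 3 * HH th k c * (p2 - p1)) by nra.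
  lra.
Qed.

Lemma M_d p1 p2 : p1 <= p2 -> dd th p1 <= dd th p2.
Proof.
  intros H. destruct (Req_dec p1 p2). subst; lra.
  destruct (mvt (dd th) _ p1 p2 ltac:(lra) (fun x => D_dd th x Hth)) as [c [Hc Hc2]].
  pose proof (gg_le1 c). nra.
Qed.

Lemma M_tt p1 p2 : 0 <= p1 -> p1 <= p2 -> p2 <= PI -> tt th p1 <= tt th p2.
Proof.
  intros H1 H H2. destruct (Req_dec p1 p2). subst; lra.
  destruct (mvt (tt th) _ p1 p2 ltac:(lra) (fun x => D_tt th x Hth)) as [c [Hc Hc2]].
  pose proof (gg_ge0 c ltac:(lra)) as Hg. unfold gg in Hg.
  assert (0 <= cos th * sin c / ss th c * (p2 - p1)) by (apply Rmult_le_pos; lra).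
  lra.
Qed.

End Mono.

Section Main.
Variable th : R.
Hypothesis Hth : 0 < th < PI/2.

Lemma SS_sq k p : SS th k p ^ 2 = ee th k p ^ 2 * (1 - gg th p ^ 2).
Proof.
  pose proof (ss_gt0 th Hth p). pose proof (ss_sq th p Hth).
  destruct (sc_facts th Hth) as [[? ?] [[? ?] ?]].
  pose proof (sin2_cos2 p). unfold Rsqr in *.
  unfold SS, gg. field_simplify; [|lra..].
  unfold Rdiv; f_equal.
  replace (sin th ^ 2) with (1 - cos th ^2) by lra.
  replace (sin p ^ 2) with (1 - cos p ^2) by nra.
  rewrite H0. ring.
Qed.

Lemma SS_pos k p : 0 < SS th k p.
Proof.
  pose proof (ss_gt0 th Hth p). pose proof (ee_pos th Hth k p).
  destruct (sc_facts th Hth) as [[? ?] _]. unfold SS.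
  unfold Rdiv. apply Rmult_lt_0_compat. nra. apply Rinv_0_lt_compat; lra.
Qed.

Lemma FF_sol k p : FF th k (PP th k p) p = SS th k p ^ 2.
Proof.
  rewrite SS_sq. unfold FF, PP. ring.
Qed.

Lemma L_same k p1 p2 : 0 <= p1 -> p1 < p2 -> p2 <= PI -> PP th k p1 = PP th k p2 ->
  SS th k p1 < SS th k p2.
Proof.
  intros H1 H2 H3 HP.
  destruct (Rle_lt_dec 0 (HH th k p1)) as [Hh|Hh].
  - apply M_S; auto.
  - set (f := PP th k p1).
    destruct (mvt (FF th k f) _ p1 p2 H2 (fun x => D_FF th k f x Hth)) as [c [Hc Hc2]].
    assert (PP th k c < f).
    { destruct (Rle_lt_dec (HH th k c) 0) as [Hc3|Hc3].
      - apply (M_Pdec th Hth k p1 c); lra.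
      - unfold f; rewrite HP. apply (M_Pinc th Hth k c p2); lra. }
    assert (FF th k f p1 < FF th k f p2) by nra.
    assert (E1: FF th k f p1 = SS th k p1 ^2) by (unfold f; apply FF_sol).
    assert (E2: FF th k f p2 = SS th k p2 ^2) by (unfold f; rewrite HP; apply FF_sol).
    rewrite E1, E2 in H0.
    pose proof (SS_pos k p1). pose proof (SS_pos k p2). nra.
Qed.

Lemma ee_lt k k' p p' : (k < k')%nat -> ee th k p < ee th k' p'.
Proof.
  intros Hk. unfold ee. pose proof (tt_range th p Hth). pose proof (tt_range th p' Hth).
  assert (INR k + 1 <= INR k') by (rewrite <- S_INR; apply le_INR; lia).
  pose proof PI_RGT_0. nra.
Qed.

Lemma L_cross k k' p p' : (k < k')%nat -> 0 <= p <= PI -> 0 <= p' <= PI ->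
  0 <= HH th k p -> PP th k p = PP th k' p' -> SS th k p < SS th k' p'.
Proof.
  intros Hk Hp Hp' Hh HP.
  destruct (Rle_lt_dec p' p) as [Hpp|Hpp].
  - pose proof (M_d th Hth p' p Hpp) as Hd.
    pose proof (ee_lt k k' p p' Hk) as He.
    pose proof (ee_pos th Hth k p).
    pose proof (gg_ge0 th Hth p Hp). pose proof (gg_ge0 th Hth p' Hp').
    pose proof (gg_le1 th Hth p). pose proof (gg_le1 th Hth p').
    assert (ee th k' p' * gg th p' - ee th k p * gg th p <= ee th k' p' - ee th k p)
      by (unfold PP, dd, ee in *; lra).
    assert (SS th k p ^ 2 < SS th k' p' ^ 2).
    { rewrite !SS_sq.
      set (e := ee th k p) in *. set (e' := ee th k' p') in *.
      set (g := gg th p) in *. set (g' := gg th p') in *.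
      assert ((e' * g' - e * g) * (e' * g' + e * g) <= (e' - e) * (e' * g' + e * g)).
      { apply Rmult_le_compat_r; nra. }
      assert ((e' - e) * (e' * g' + e * g) < (e' - e) * (e' + e)).
      { apply Rmult_lt_compat_l; nra. }
      nra. }
    pose proof (SS_pos k p). pose proof (SS_pos k' p'). nra.
  - pose proof (M_S_le th Hth k p p' ltac:(lra) ltac:(lra) ltac:(lra) Hh).
    assert (SS th k p' < SS th k' p').
    { unfold SS. pose proof (ee_lt k k' p' p' Hk). pose proof (ss_gt0 th Hth p').
      destruct (sc_facts th Hth) as [[? ?] _].
      unfold Rdiv. apply Rmult_lt_compat_r. apply Rinv_0_lt_compat; lra.
      apply Rmult_lt_compat_l; lra. }
    lra.
Qed.

Lemma tt_PI : tt th PI = PI - th.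
Proof.
  unfold tt. rewrite cos_PI. replace (cos th * -1) with (- cos th) by ring.
  rewrite acos_opp, acos_cos_th; auto.
Qed.

Lemma PP_PI k : PP th k PI = INR k * PI + PI.
Proof. unfold PP, gg. rewrite sin_PI. unfold Rdiv. ring. Qed.

Lemma HH_PI k : 0 < HH th k PI.
Proof.
  unfold HH. rewrite cos_PI. pose proof (ss_gt0 th Hth PI). pose proof (ee_pos th Hth k PI).
  destruct (sc_facts th Hth) as [_ [[? ?] _]]. nra.
Qed.

Lemma L_chain k p : 0 <= p <= PI -> HH th k p < 0 -> PP th k p <= INR k * PI + PI ->
  exists ph, p < ph <= PI /\ PP th k ph = PP th k p /\ 0 <= HH th k ph.
Proof.
  intros Hp Hh Hle.
  pose proof (HH_PI k).
  destruct (IVT_cor (HH th k) p PI (cont_of _ _ (fun x => D_HH th k x Hth)) ltac:(lra) ltac:(nra))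
    as [z [Hz1 Hz2]].
  assert (p < z) by (destruct (Req_dec p z); [subst; lra | lra]).
  pose proof (M_Pdec th Hth k p z ltac:(lra) H0 ltac:(lra) ltac:(lra)).
  set (G := fun q => PP th k q - PP th k p).
  assert (HG: continuity G).
  { unfold G. apply continuity_minus. exact (cont_of _ _ (fun x => D_PP th k x Hth)).
    apply continuity_const. intros ? ?; reflexivity. }
  destruct (IVT_cor G z PI HG ltac:(lra)) as [ph [Hph1 Hph2]].
  { unfold G. rewrite PP_PI. nra. }
  exists ph. unfold G in Hph2. split; [lra|]. split; [lra|].
  rewrite <- Hz2. apply M_H_le; lra.
Qed.

End Main.

Lemma sin_shift_sq k t : sin (t + INR k * PI) ^ 2 = sin t ^ 2.
Proof.
  induction k as [|k IH].
  - simpl. rewrite Rmult_0_l, Rplus_0_r. reflexivity.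
  - rewrite S_INR. replace (t + (INR k + 1) * PI) with ((t + INR k * PI) + PI) by ring.
    rewrite neg_sin. rewrite <- IH. ring.
Qed.

Lemma link th k eta : 0 < th < PI/2 -> in_Ik th k eta ->
  let p := acos (cos (eta - INR k * PI) / cos th) in
  0 <= p <= PI /\ eta = ee th k p /\ Phi th k eta = PP th k p /\ Sl th eta = SS th k p.
Proof.
  intros Hth HI p. unfold in_Ik in HI. rewrite S_INR in HI.
  destruct (sc_facts th Hth) as [[Ha1 Ha2] [[Hc1 Hc2] Hac]].
  pose proof PI_RGT_0.
  set (t := eta - INR k * PI).
  assert (Ht : th <= t <= PI - th) by (unfold t; lra).
  assert (Hct : - cos th <= cos t <= cos th).
  { split.
    - rewrite <- Rtrigo_facts.cos_pi_minus.
      destruct (Req_dec t (PI - th)) as [E|E]; [rewrite E; lra|].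
      left. apply cos_decreasing_1; lra.
    - destruct (Req_dec t th) as [E|E]; [rewrite E; lra|].
      left. apply cos_decreasing_1; lra. }
  assert (Hu : -1 <= cos t / cos th <= 1).
  { split; [apply (Rmult_le_reg_r (cos th)); auto; unfold Rdiv; rewrite Rmult_assoc, Rinv_l by lra; lra
           |apply (Rmult_le_reg_r (cos th)); auto; unfold Rdiv; rewrite Rmult_assoc, Rinv_l by lra; lra]. }
  assert (Hcp : cos p = cos t / cos th) by (unfold p; apply cos_acos; auto).
  assert (Htt : tt th p = t).
  { unfold tt. rewrite Hcp. replace (cos th * (cos t / cos th)) with (cos t) by (field; lra).
    apply acos_cos. lra. }
  assert (Hp : 0 <= p <= PI) by apply acos_bound.
  assert (He : eta = ee th k p) by (unfold ee; rewrite Htt; unfold t; ring).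
  assert (Hs : ss th p = sin t) by (unfold ss; rewrite Htt; reflexivity).
  assert (Hspos : sin th <= sin t) by (rewrite <- Hs; apply ss_pos; auto).
  assert (Hsq : sin eta ^ 2 = sin t ^ 2).
  { replace eta with (t + INR k * PI) by (unfold t; ring). apply sin_shift_sq. }
  assert (Habs : Rabs (sin eta) = sin t).
  { destruct (Rcase_abs (sin eta)).
    - rewrite Rabs_left by auto. nra.
    - rewrite Rabs_right by auto. nra. }
  split; auto. split; auto. split.
  - unfold Phi, PP, gamma. fold t. rewrite <- He.
    assert (Hg : sqrt (1 - sin th ^ 2 / sin eta ^ 2) = gg th p).
    { pose proof (gg_ge0 th Hth p Hp) as Hg0.
      rewrite <- (sqrt_pow2 (gg th p)) by auto. f_equal.
      unfold gg. rewrite Hs, Hsq.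
      pose proof (sin2_cos2 p). pose proof (sin2_cos2 t). unfold Rsqr in *.
      assert (E: (cos th * sin p) ^ 2 = cos th ^ 2 - cos t ^ 2).
      { replace ((cos th * sin p) ^ 2) with (cos th ^ 2 * (1 - cos p ^ 2)) by nra.
        rewrite Hcp. field. lra. }
      replace ((cos th * sin p / sin t) ^ 2) with ((cos th * sin p) ^ 2 / sin t ^ 2)
        by (field; lra).
      rewrite E. field_simplify; [|lra..]. unfold Rdiv; f_equal. nra. }
    rewrite Hg. change (acos (cos t / cos th)) with p. ring.
  - unfold Sl, SS. rewrite Habs, Hs, <- He. reflexivity.
Qed.

Theorem proposition5p76 (th1 phi1 eta eta' : R) (k k' : nat) :
  0 < th1 < PI / 2 ->
  0 <= phi1 <= PI ->
  in_Ik th1 k eta ->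
  in_Ik th1 k' eta' ->
  eta < eta' ->
  Phi th1 k eta = phi1 ->
  Phi th1 k' eta' = phi1 ->
  Sl th1 eta < Sl th1 eta'.
Proof.
  intros Hth Hphi HI HI' Hlt HP HP'.
  pose proof HI as HI0. pose proof HI' as HI0'.
  destruct (link th1 k eta Hth HI) as [Hp [He [HPh HSl]]].
  destruct (link th1 k' eta' Hth HI') as [Hp' [He' [HPh' HSl']]].
  set (p := acos (cos (eta - INR k * PI) / cos th1)) in *.
  set (p' := acos (cos (eta' - INR k' * PI) / cos th1)) in *.
  rewrite HSl, HSl'. rewrite HPh in HP. rewrite HPh' in HP'.
  pose proof PI_RGT_0.
  destruct (lt_eq_lt_dec k k') as [[Hk|Hk]|Hk].
  - destruct (Rle_lt_dec 0 (HH th1 k p)) as [Hh|Hh].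
    + apply L_cross; auto. lra.
    + assert (PP th1 k p <= INR k * PI + PI) by (pose proof (pos_INR k); nra).
      destruct (L_chain th1 Hth k p Hp Hh H0) as [ph [Hph1 [Hph2 Hph3]]].
      apply Rlt_trans with (SS th1 k ph).
      * apply L_same; auto; lra.
      * apply L_cross; auto; lra.
  - subst k'. apply L_same; auto; try lra.
    destruct (Rle_lt_dec p' p) as [Hq|Hq]; auto.
    pose proof (M_tt th1 Hth p' p ltac:(lra) Hq ltac:(lra)).
    unfold ee in He, He'. lra.
  - exfalso. unfold in_Ik in HI0, HI0'. rewrite S_INR in HI0'.
    assert (INR k' + 1 <= INR k) by (rewrite <- S_INR; apply le_INR; lia).
    nra.
Qed.
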